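(* For $n\ge2$ and all $P,Q\in\Gamma_n$, $D_{\Psi h}(P\|Q)\le \frac98 D_{\Psi J}(P\|Q)$.
   Context: $\Gamma_n=\{P=(p_1,\dots,p_n): p_i>0,\ \sum p_i=1\}$. $h(P\|Q)=\frac12\sum_{i=1}^n(\sqrt{p_i}-\sqrt{q_i})^2$; $\Psi(P\|Q)=\sum_{i=1}^n\frac{(p_i-q_i)^2(p_i+q_i)}{p_iq_i}$; $J(P\|Q)=\sum_{i=1}^n(p_i-q_i)\ln\frac{p_i}{q_i}$. $D_{\Psi h}=\frac1{16}\Psi-h$, $D_{\Psi J}=\frac1{16}\Psi-\frac18J$. *)

(* Defs.v *)
(* concrete reals R. Distributions on n points are functions
   nat -> R, indexed by 0..n-1. *)
From Stdlib Require Import Reals List.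
Open Scope R_scope.

Fixpoint rsum (n : nat) (f : nat -> R) : R :=
  match n with
  | O => 0
  | S m => rsum m f + f m
  end.

Definition Gamma (n : nat) (p : nat -> R) : Prop :=
  (forall i, (i < n)%nat -> 0 < p i) /\ rsum n p = 1.

Definition hellinger (n : nat) (p q : nat -> R) : R :=
  / 2 * rsum n (fun i => (sqrt (p i) - sqrt (q i)) ^ 2).

Definition Psi (n : nat) (p q : nat -> R) : R :=
  rsum n (fun i => (p i - q i) ^ 2 * (p i + q i) / (p i * q i)).

Definition Jdiv (n : nat) (p q : nat -> R) : R :=
  rsum n (fun i => (p i - q i) * ln (p i / q i)).

Definition D_Psi_h (n : nat) (p q : nat -> R) : R :=
  / 16 * Psi n p q - hellinger n p q.

Definition D_Psi_J (n : nat) (p q : nat -> R) : R :=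
  / 16 * Psi n p q - / 8 * Jdiv n p q.

(* Main.v *)
Require Import Defs.
From Stdlib Require Import Reals Lra Psatz Lia.
From Coquelicot Require Import Coquelicot.
Open Scope R_scope.

Definition F (x : R) : R := (x^4-1)/(36*x^2) + 16*(x-1)/(9*(x+1)) - ln x.
Definition F' (x : R) : R := (2*x + 2/x^3)/36 + 32/(9*(x+1)^2) - 1/x.

Lemma F_der x : 0 < x -> is_derive F x (F' x).
Proof.
  intros Hx. unfold F, F'. auto_derive.
  - repeat split; try lra; nra.
  - field. lra.
Qed.

Lemma F'_nonneg x : 0 < x -> 0 <= F' x.
Proof.
  intros Hx. replace (F' x) with ((x-1)^4*(x^2+6*x+1)/(18*x^3*(x+1)^2)).
  - apply Rmult_le_pos.
    + apply Rmult_le_pos. { replace ((x-1)^4) with (((x-1)^2)^2) by ring. apply pow2_ge_0. } nra.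
    + left. apply Rinv_0_lt_compat. apply Rmult_lt_0_compat. apply Rmult_lt_0_compat. lra. apply pow_lt; lra. apply pow_lt; lra.
  - unfold F'. field. lra.
Qed.

Lemma F1 : F 1 = 0.
Proof. unfold F. rewrite ln_1. field. Qed.

Lemma F_sign x : 0 < x -> 0 <= (x^2 - 1) * F x.
Proof.
  intros Hx. destruct (Rtotal_order x 1) as [H|[H|H]].
  - destruct (MVT_cor2 F F' x 1 H) as [c [Hc1 Hc2]].
    { intros c Hc. apply is_derive_Reals. apply F_der. lra. }
    rewrite F1 in Hc1. assert (0 <= F' c) by (apply F'_nonneg; lra).
    assert (0 <= F' c * (1-x)) by (apply Rmult_le_pos; lra).
    assert (F x <= 0) by lra. assert (x^2-1 <= 0) by nra. nra.
  - subst. rewrite F1. lra.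
  - destruct (MVT_cor2 F F' 1 x H) as [c [Hc1 Hc2]].
    { intros c Hc. apply is_derive_Reals. apply F_der. lra. }
    rewrite F1 in Hc1. assert (0 <= F' c) by (apply F'_nonneg; lra).
    assert (0 <= F' c * (x-1)) by (apply Rmult_le_pos; lra).
    assert (0 <= F x) by lra. assert (0 <= x^2-1) by nra. nra.
Qed.

Lemma term_nonneg p q : 0 < p -> 0 < q ->
  0 <= (p - q) ^ 2 * (p + q) / (p * q) / 128 + / 2 * (sqrt p - sqrt q) ^ 2
       - 9/64 * ((p - q) * ln (p / q)).
Proof.
  intros Hp Hq.
  assert (Ha := sqrt_lt_R0 p Hp). assert (Hb := sqrt_lt_R0 q Hq).
  rewrite <- (sqrt_sqrt p) at 1 2 3 4 5 6 by lra.
  rewrite <- (sqrt_sqrt q) at 1 2 3 4 5 6 by lra.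
  set (a := sqrt p) in *. set (b := sqrt q) in *.
  assert (E : a * a / (b * b) = (a/b) * (a/b)) by (field; lra).
  rewrite E, ln_mult by (apply Rdiv_lt_0_compat; lra).
  assert (Hx : 0 < a / b) by (apply Rdiv_lt_0_compat; lra).
  rewrite !sqrt_square by lra.
  pose proof (F_sign (a/b) Hx) as HF.
  replace ((a * a - b * b) ^ 2 * (a * a + b * b) / (a * a * (b * b)) / 128 + / 2 * (a - b) ^ 2 -
   9 / 64 * ((a * a - b * b) * (ln (a / b) + ln (a / b))))
   with (36/128 * (b*b) * (((a/b)^2 - 1) * F (a/b))).
  - apply Rmult_le_pos; [|exact HF]. nra.
  - unfold F. field. lra.
Qed.

Lemma rsum_nonneg n f : (forall i, (i < n)%nat -> 0 <= f i) -> 0 <= rsum n f.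
Proof.
  induction n; simpl; intros H. lra.
  assert (0 <= f n) by (apply H; lia). assert (0 <= rsum n f) by (apply IHn; intros; apply H; lia). lra.
Qed.

Theorem proposition5p12 (n : nat) (p q : nat -> R) :
  (2 <= n)%nat -> Gamma n p -> Gamma n q ->
  D_Psi_h n p q <= 9 / 8 * D_Psi_J n p q.
Proof.
  intros _ [Hp _] [Hq _].
  set (T := fun i => (p i - q i) ^ 2 * (p i + q i) / (p i * q i) / 128 + / 2 * (sqrt (p i) - sqrt (q i)) ^ 2
       - 9/64 * ((p i - q i) * ln (p i / q i))).
  assert (E : 9 / 8 * D_Psi_J n p q - D_Psi_h n p q = rsum n T).
  { unfold D_Psi_J, D_Psi_h, Psi, Jdiv, hellinger, T. clear.
    induction n; cbn [rsum]. lra. rewrite <- IHn. generalize (rsum n (fun i : nat => (p i - q i) ^ 2 * (p i + q i) / (p i * q i))) (rsum n (fun i : nat => (p i - q i) * ln (p i / q i))) (rsum n (fun i : nat => (sqrt (p i) - sqrt (q i)) ^ 2)). intros. generalize ((p n - q n) ^ 2 * (p n + q n) / (p n * q n)) ((p n - q n) * ln (p n / q n)) ((sqrt (p n) - sqrt (q n)) ^ 2). intros. lra. }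
  assert (0 <= rsum n T). { apply rsum_nonneg. intros i Hi. apply term_nonneg; auto. }
  lra.
Qed.
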